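(* Let $\Sigma$ be finite, $n\ge1$, $\mathbb{X}\subseteq\Sigma^n$, and let $\rho,\sigma$ be $|\mathbb{X}|\times|\mathbb{X}|$ Gram matrices of unit vectors. Then $\mathcal{D}_H(\rho,\sigma)\le\mathrm{Adv}^\star(\rho,\sigma)$.
   Context: $(A\circ B)_{ij}=A_{ij}B_{ij}$; $\|A\|$ is the operator norm, $\|A\|_{\mathrm{tr}}$ the trace norm. Hadamard product distance: $\mathcal{D}_H(\rho,\sigma)=\max_{u:\|u\|=1}\mathcal{D}(\rho\circ uu^*,\sigma\circ uu^* )$, where $\mathcal D(\rho',\sigma')=\frac12\|\rho'-\sigma'\|_{\mathrm{tr}}$ is the trace distance of density matrices. Adversary bound: for $j\in[n]$ let $\Delta_j$ be the $|\mathbb{X}|\times|\mathbb{X}|$ matrix with $(\Delta_j)_{x,y}=1-\delta_{x_j,y_j}$. $\mathrm{Adv}^\star(\rho,\sigma)=\max_{\Gamma}\|\Gamma\circ(\rho-\sigma)\|$ over Hermitian $|\mathbb{X}|\times|\mathbb{X}|$ matrices $\Gamma$ with $\|\Gamma\circ\Delta_j\|\le 1$ for all $j\in[n]$. *)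

(* Defs.v *)
(* Complex numbers are modelled by an arbitrary
   numClosedFieldType C (an algebraically closed field with conjugation and
   its real-closed ordered real part, e.g. algC or the genuine complex field). *)
From HB Require Import structures.
From mathcomp Require Import all_boot all_order all_algebra.
Set Implicit Arguments. Unset Strict Implicit. Unset Printing Implicit Defensive.
Import Order.TTheory GRing.Theory Num.Theory.
Local Open Scope ring_scope.

Section Defs.
Variable C : numClosedFieldType.

Definition mxstar m n (A : 'M[C]_(m, n)) : 'M[C]_(n, m) := (map_mx Num.conj A)^T.

Definition hadamard m n (A B : 'M[C]_(m, n)) : 'M[C]_(m, n) :=
  \matrix_(i, j) (A i j * B i j).

Definition hermitian n (A : 'M[C]_n) : Prop := mxstar A = A.

Definition unit_vec N (u : 'cV[C]_N) : Prop := \sum_(i < N) `|u i 0| ^+ 2 = 1.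

Definition gram_of_unit_vectors N (rho : 'M[C]_N) : Prop :=
  exists (d : nat) (V : 'M[C]_(d, N)),
    (forall i : 'I_N, \sum_(l < d) `|V l i| ^+ 2 = 1) /\ rho = mxstar V *m V.

(* eigenvalues (with multiplicity) of a square matrix: the roots of its
   characteristic polynomial, which splits since C is algebraically closed *)
Definition eigenvalues n (M : 'M[C]_n) : seq C :=
  sval (closed_field_poly_normal (char_poly M)).

Definition singular_values m n (A : 'M[C]_(m, n)) : seq C :=
  [seq sqrtC x | x <- eigenvalues (mxstar A *m A)].

Definition trnorm m n (A : 'M[C]_(m, n)) : C :=
  \sum_(s <- singular_values A) s.

Definition opnorm m n (A : 'M[C]_(m, n)) : C :=
  \big[Num.max/0]_(s <- singular_values A) s.

Definition trace_dist n (r s : 'M[C]_n) : C := trnorm (r - s) / 2%:R.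

Definition outer N (u : 'cV[C]_N) : 'M[C]_N := u *m mxstar u.

Definition Delta (Sigma : finType) (n : nat) (X : {set n.-tuple Sigma})
    (j : 'I_n) : 'M[C]_#|X| :=
  \matrix_(i, k) (1 - ((tnth (enum_val i) j == tnth (enum_val k) j) : nat)%:R).

Definition adv_feasible (Sigma : finType) (n : nat) (X : {set n.-tuple Sigma})
    (G : 'M[C]_#|X|) : Prop :=
  hermitian G /\ forall j : 'I_n, opnorm (hadamard G (Delta X j)) <= 1.

End Defs.

Arguments Delta {C Sigma n} X j.
Arguments adv_feasible {C Sigma n} X G.

(* Main.v *)
Require Import Defs.
From HB Require Import structures.
From mathcomp Require Import all_boot all_order all_algebra.
From mathcomp Require Import sesquilinear spectral ring.
Set Implicit Arguments. Unset Strict Implicit. Unset Printing Implicit Defensive.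
Import Order.TTheory GRing.Theory Num.Theory.
Local Open Scope ring_scope.
Local Open Scope sesquilinear_scope.

Definition qf {C : numClosedFieldType} N (H : 'M[C]_N) (v : 'cV[C]_N) : C :=
  \sum_i \sum_j (v i 0)^* * H i j * v j 0.
Definition sqn {C : numClosedFieldType} N (v : 'cV[C]_N) : C :=
  \sum_i `|v i 0| ^+ 2.

Lemma mxstarE {C : numClosedFieldType} m n (A : 'M[C]_(m, n)) : mxstar A = A ^t*.
Proof. by rewrite /mxstar map_trmx. Qed.

Lemma qfE {C : numClosedFieldType} N (H : 'M[C]_N) (v : 'cV[C]_N) :
  qf H v = (v ^t* *m H *m v) 0 0.
Proof.
rewrite /qf !mxE exchange_big /=; apply: eq_bigr => j _.
rewrite mxE big_distrl /=; apply: eq_bigr => i _.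
by rewrite !mxE.
Qed.

Lemma sqnE {C : numClosedFieldType} N (v : 'cV[C]_N) :
  sqn v = (v ^t* *m v) 0 0.
Proof.
rewrite /sqn !mxE; apply: eq_bigr => i _.
by rewrite !mxE normCK mulrC.
Qed.

Lemma unitary_tC {C : numClosedFieldType} N (P : 'M[C]_N) :
  P \is unitarymx -> P ^t* *m P = 1%:M.
Proof. by move=> /unitarymxP /mulmx1C. Qed.

Lemma sqn_unitary {C : numClosedFieldType} N (P : 'M[C]_N) (v : 'cV[C]_N) :
  P \is unitarymx -> sqn (P *m v) = sqn v.
Proof.
move=> PU; rewrite !sqnE trmx_mul map_mxM -mulmxA (mulmxA (P ^t*)).
by rewrite unitary_tC // mul1mx.
Qed.

Lemma qf_diag {C : numClosedFieldType} N (e : 'rV[C]_N) (w : 'cV[C]_N) :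
  qf (diag_mx e) w = \sum_k e 0 k * `|w k 0| ^+ 2.
Proof.
rewrite qfE mul_mx_diag !mxE; apply: eq_bigr => k _.
by rewrite !mxE normCK; ring.
Qed.

Lemma qf_spec {C : numClosedFieldType} N (P : 'M[C]_N) (e : 'rV[C]_N) (v : 'cV[C]_N) :
  qf (P ^t* *m diag_mx e *m P) v = \sum_k e 0 k * `|(P *m v) k 0| ^+ 2.
Proof.
rewrite -qf_diag !qfE trmx_mul map_mxM !mulmxA.
by rewrite -!mulmxA.
Qed.

Lemma char_poly_unitary {C : numClosedFieldType} N (P M : 'M[C]_N) :
  P \is unitarymx -> char_poly (P ^t* *m M *m P) = char_poly M.
Proof.
move=> PU.
have E : char_poly_mx (P ^t* *m M *m P) =
   map_mx polyC (P ^t*) *m char_poly_mx M *m map_mx polyC P.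
  rewrite /char_poly_mx mulmxBr mulmxBl -!map_mxM.
  congr (_ - _).
  by rewrite mul_mx_scalar -scalemxAl -map_mxM unitary_tC // map_mx1 scalemx1.
rewrite /char_poly E !det_mulmx mulrAC -det_mulmx -map_mxM unitary_tC //.
by rewrite map_mx1 det1 mul1r.
Qed.

Lemma eig_spec {C : numClosedFieldType} N (P : 'M[C]_N) (e : 'rV[C]_N) :
  P \is unitarymx ->
  perm_eq (eigenvalues (P ^t* *m diag_mx e *m P)) [seq e 0 k | k <- enum 'I_N].
Proof.
move=> PU; rewrite /eigenvalues; case: closed_field_poly_normal => r /= Hr.
rewrite char_poly_unitary // in Hr.
rewrite (monicP (char_poly_monic _)) scale1r char_poly_trig ?diag_mx_is_trig // in Hr.
apply: prod_XsubC_eq; rewrite -Hr big_map big_enum /=.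
by apply: eq_bigr => i _; rewrite mxE eqxx mulr1n.
Qed.

Lemma star_spec {C : numClosedFieldType} N (P : 'M[C]_N) (d : 'rV[C]_N) :
  P \is unitarymx ->
  mxstar (P ^t* *m diag_mx d *m P) *m (P ^t* *m diag_mx d *m P) =
  P ^t* *m diag_mx (\row_k (`|d 0 k| ^+ 2)) *m P.
Proof.
move=> PU; rewrite mxstarE !trmx_mul !map_mxM trmxCK tr_diag_mx.
rewrite -!mulmxA; congr (_ *m _).
rewrite !mulmxA -(mulmxA _ P) (unitarymxP PU) mulmx1.
congr (_ *m _); rewrite map_diag_mx mulmx_diag.
by apply: congr1; apply/rowP => k; rewrite !mxE normCK mulrC.
Qed.

Lemma sv_spec {C : numClosedFieldType} N (P : 'M[C]_N) (d : 'rV[C]_N) :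
  P \is unitarymx ->
  perm_eq (singular_values (P ^t* *m diag_mx d *m P)) [seq `|d 0 k| | k <- enum 'I_N].
Proof.
move=> PU; rewrite /singular_values star_spec //.
have E : [seq sqrtC x | x <- [seq (\row_k (`|d 0 k| ^+ 2)) 0 k | k <- enum 'I_N]]
   = [seq `|d 0 k| | k <- enum 'I_N].
  by rewrite -map_comp; apply: eq_map => k /=; rewrite mxE sqrCK.
by rewrite -E; apply: perm_map; apply: eig_spec.
Qed.

Lemma trnorm_spec {C : numClosedFieldType} N (P : 'M[C]_N) (d : 'rV[C]_N) :
  P \is unitarymx -> trnorm (P ^t* *m diag_mx d *m P) = \sum_k `|d 0 k|.
Proof.
by move=> PU; rewrite /trnorm (perm_big _ (sv_spec d PU)) big_map big_enum.
Qed.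

Lemma bigmax_props {C : numClosedFieldType} (s : seq C) :
  all (fun x => 0 <= x) s ->
  0 <= \big[Num.max/0]_(y <- s) y /\
  forall x, x \in s -> x <= \big[Num.max/0]_(y <- s) y.
Proof.
elim: s => [|a s IH]; first by rewrite big_nil.
rewrite big_cons /= => /andP [a0 /IH [m0 Hm]].
have ra := ger0_real a0; have rm := ger0_real m0.
case: (real_leP ra rm) => h; split => //.
- by move=> x; rewrite inE => /orP [/eqP ->|/Hm].
- move=> x; rewrite inE => /orP [/eqP ->|/Hm hx] //.
  exact: le_trans hx (ltW h).
Qed.

Lemma bigmax_le {C : numClosedFieldType} (s : seq C) (c : C) : 0 <= c ->
  all (fun x => 0 <= x) s ->
  (forall x, x \in s -> x <= c) -> \big[Num.max/0]_(y <- s) y <= c.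
Proof.
move=> c0 s0 H; have [m0 _] := bigmax_props s0.
elim: s s0 H m0 => [|a s IH]; first by move=> *; rewrite big_nil.
rewrite /= => /andP [a0 s0] H; rewrite big_cons => _.
have ac : a <= c by apply: H; rewrite mem_head.
have [m0 _] := bigmax_props s0.
have mc : \big[Num.max/0]_(y <- s) y <= c.
  by apply: IH => // x xs; apply: H; rewrite inE xs orbT.
by case: (real_leP (ger0_real a0) (ger0_real m0)).
Qed.

Lemma normal_spec {C : numClosedFieldType} N (H : 'M[C]_N) :
  H \is normalmx ->
  exists P (d : 'rV[C]_N), P \is unitarymx /\ H = P ^t* *m diag_mx d *m P.
Proof.
move=> /orthomx_spectralP E; exists (spectralmx H), (spectral_diag H).
by rewrite -invmx_unitary ?spectral_unitarymx.
Qed.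

Lemma sum_delta {C : numClosedFieldType} N (f : 'I_N -> C) (k : 'I_N) :
  \sum_l f l * `|(delta_mx k 0 : 'cV[C]_N) l 0| ^+ 2 = f k.
Proof.
rewrite (bigD1 k) //= big1 ?addr0.
  by rewrite mxE !eqxx /= normr1 expr1n mulr1.
by move=> l lk; rewrite mxE (negbTE lk) /= normr0 expr0n /= mulr0.
Qed.

Lemma opnorm_ge {C : numClosedFieldType} N (P : 'M[C]_N) (d : 'rV[C]_N) :
  P \is unitarymx ->
  0 <= opnorm (P ^t* *m diag_mx d *m P) /\
  forall k, `|d 0 k| <= opnorm (P ^t* *m diag_mx d *m P).
Proof.
move=> PU; have pe := sv_spec d PU.
have s0 : all (fun x => 0 <= x) (singular_values (P ^t* *m diag_mx d *m P)).
  apply/allP => x; rewrite (perm_mem pe) => /mapP [k _ ->]; exact: normr_ge0.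
have [m0 Hm] := bigmax_props s0; split => // k.
by apply: Hm; rewrite (perm_mem pe); apply: map_f; rewrite mem_enum.
Qed.

Lemma opnorm_le {C : numClosedFieldType} N (P : 'M[C]_N) (d : 'rV[C]_N) (c : C) :
  P \is unitarymx -> 0 <= c -> (forall k, `|d 0 k| <= c) ->
  opnorm (P ^t* *m diag_mx d *m P) <= c.
Proof.
move=> PU c0 H; have pe := sv_spec d PU.
have s0 : all (fun x => 0 <= x) (singular_values (P ^t* *m diag_mx d *m P)).
  apply/allP => x; rewrite (perm_mem pe) => /mapP [k _ ->]; exact: normr_ge0.
apply: bigmax_le => // x; rewrite (perm_mem pe) => /mapP [k _ ->]; exact: H.
Qed.

Lemma opnorm_qf {C : numClosedFieldType} N (P : 'M[C]_N) (d : 'rV[C]_N) (v : 'cV[C]_N) :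
  P \is unitarymx ->
  `|qf (P ^t* *m diag_mx d *m P) v| <= opnorm (P ^t* *m diag_mx d *m P) * sqn v.
Proof.
move=> PU; have [m0 Hm] := opnorm_ge d PU.
rewrite qf_spec -(sqn_unitary v PU) /sqn mulr_sumr.
apply: le_trans (ler_norm_sum _ _ _) _; apply: ler_sum => k _.
rewrite normrM (ger0_norm (exprn_ge0 _ (normr_ge0 _))).
by apply: ler_wpM2r; rewrite ?exprn_ge0 ?normr_ge0.
Qed.

Lemma opnorm_le_qf {C : numClosedFieldType} N (P : 'M[C]_N) (d : 'rV[C]_N) (c : C) :
  P \is unitarymx -> 0 <= c ->
  (forall v, `|qf (P ^t* *m diag_mx d *m P) v| <= c * sqn v) ->
  opnorm (P ^t* *m diag_mx d *m P) <= c.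
Proof.
move=> PU c0 H; apply: opnorm_le => // k.
set e : 'cV[C]_N := delta_mx k 0.
have := H (P ^t* *m e).
have Pv : P *m (P ^t* *m e) = e.
  by rewrite mulmxA (unitarymxP PU) mul1mx.
rewrite qf_spec -(sqn_unitary _ PU) Pv sum_delta.
suff -> : sqn e = 1 by rewrite mulr1.
rewrite /sqn -(sum_delta (fun _ => 1) k).
by apply: eq_bigr => l _; rewrite mul1r.
Qed.

Lemma herm_normal {C : numClosedFieldType} N (H : 'M[C]_N) : H ^t* = H -> H \is normalmx.
Proof. by move=> E; apply/normalmxP; rewrite E. Qed.

Lemma hermE {C : numClosedFieldType} N (H : 'M[C]_N) : H ^t* = H -> forall x y, (H y x)^* = H x y.
Proof. by move=> E x y; rewrite -{2}E !mxE. Qed.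

Lemma hermI {C : numClosedFieldType} N (H : 'M[C]_N) : (forall x y, (H y x)^* = H x y) -> H ^t* = H.
Proof. by move=> E; apply/matrixP => x y; rewrite !mxE. Qed.

Lemma hadamard_herm {C : numClosedFieldType} N (H1 H2 : 'M[C]_N) :
  H1 ^t* = H1 -> H2 ^t* = H2 -> (hadamard H1 H2) ^t* = hadamard H1 H2.
Proof.
move=> /hermE E1 /hermE E2; apply: hermI => x y.
by rewrite !mxE rmorphM /= E1 E2.
Qed.

Lemma star_spec2 {C : numClosedFieldType} N (P : 'M[C]_N) (d : 'rV[C]_N) :
  (P ^t* *m diag_mx d *m P) ^t* = P ^t* *m diag_mx (map_mx Num.conj d) *m P.
Proof.
by rewrite !trmx_mul !map_mxM trmxCK tr_diag_mx map_diag_mx mulmxA.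
Qed.

Lemma spec_herm_real {C : numClosedFieldType} N (P : 'M[C]_N) (d : 'rV[C]_N) :
  P \is unitarymx -> (P ^t* *m diag_mx d *m P) ^t* = P ^t* *m diag_mx d *m P ->
  forall k, (d 0 k)^* = d 0 k.
Proof.
move=> PU; rewrite star_spec2 => E k.
have F : forall M : 'M[C]_N, P *m (P ^t* *m M *m P) *m P ^t* = M.
  by move=> M; rewrite !mulmxA (unitarymxP PU) mul1mx mulmxtVK.
have := congr1 (fun M => (P *m M *m P ^t*) k k) E; rewrite /= !F.
by rewrite !mxE eqxx !mulr1n.
Qed.

Lemma spec_herm {C : numClosedFieldType} N (P : 'M[C]_N) (d : 'rV[C]_N) :
  (forall k, (d 0 k)^* = d 0 k) -> (P ^t* *m diag_mx d *m P) ^t* = P ^t* *m diag_mx d *m P.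
Proof.
move=> E; rewrite star_spec2; congr (_ *m _ *m _); apply: congr1.
by apply/rowP => k; rewrite !mxE E.
Qed.

Lemma gram_props {C : numClosedFieldType} N (rho : 'M[C]_N) :
  gram_of_unit_vectors rho -> rho ^t* = rho /\ forall i, rho i i = 1.
Proof.
move=> [d [V [HV ->]]]; rewrite mxstarE; split.
  by rewrite trmx_mul map_mxM trmxCK.
move=> i; rewrite -(HV i) !mxE; apply: eq_bigr => l _.
by rewrite !mxE normCK mulrC.
Qed.

Lemma lemma_abs {C : numClosedFieldType} (x y c : C) :
  0 <= x -> x <= c -> 0 <= y -> y <= c -> `|x - y| <= c.
Proof.
move=> x0 xc y0 yc; rewrite real_ler_norml ?rpredB ?ger0_real //.
apply/andP; split.
  apply: (@le_trans _ _ (- y)); first by rewrite lerN2.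
  by apply: ler_wpDl.
by apply: (@le_trans _ _ x); rewrite ?gerBl.
Qed.

Definition mask {C : numClosedFieldType} {Sigma : finType} {n : nat}
  (X : {set n.-tuple Sigma}) (j : 'I_n) (a : Sigma) (v : 'cV[C]_#|X|) : 'cV[C]_#|X| :=
  \matrix_(i, k) (v i k * ((tnth (enum_val i) j == a) : nat)%:R).
Arguments mask {C Sigma n} X j a v.

Lemma qf_Delta {C : numClosedFieldType} {Sigma : finType} {n : nat}
  (X : {set n.-tuple Sigma}) (j : 'I_n) (G : 'M[C]_#|X|) (v : 'cV[C]_#|X|) :
  qf (hadamard G (Delta X j)) v = qf G v - \sum_a qf G (mask X j a v).
Proof.
rewrite /qf [Z in _ - Z]exchange_big /= -sumrB; apply: eq_bigr => x _.
rewrite [Z in _ - Z]exchange_big /= -sumrB; apply: eq_bigr => y _.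
rewrite (bigD1 (tnth (enum_val x) j)) //= big1 => [|a ne].
  rewrite !mxE eqxx addr0 [tnth (enum_val y) j == _]eq_sym.
  case: eqP => _ /=; rewrite ?mulr1 ?mulr0 ?subrr; ring.
rewrite !mxE eq_sym (negbTE ne) /= mulr0 rmorph0 !mul0r //.
Qed.

Lemma sqn_mask {C : numClosedFieldType} {Sigma : finType} {n : nat}
  (X : {set n.-tuple Sigma}) (j : 'I_n) (v : 'cV[C]_#|X|) :
  \sum_a sqn (mask X j a v) = sqn v.
Proof.
rewrite /sqn [LHS]exchange_big /=; apply: eq_bigr => x _.
rewrite (bigD1 (tnth (enum_val x) j)) //= big1 => [|a ne].
  by rewrite !mxE eqxx mulr1 addr0.
by rewrite !mxE eq_sym (negbTE ne) /= mulr0 normr0 expr0n.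
Qed.

Lemma transpose_spec {C : numClosedFieldType} N (P : 'M[C]_N) (e : 'rV[C]_N) :
  (P ^t* *m diag_mx e *m P) ^T = (map_mx Num.conj P) ^t* *m diag_mx e *m (map_mx Num.conj P).
Proof.
rewrite !trmx_mul tr_diag_mx -map_trmx trmxK map_trmx map_mxCK mulmxA.
by [].
Qed.

Lemma qf_proj {C : numClosedFieldType} N (Q : 'M[C]_N) (e : 'rV[C]_N) (w : 'cV[C]_N) :
  Q \is unitarymx -> (forall k, e 0 k = 0 \/ e 0 k = 1) ->
  0 <= qf (Q ^t* *m diag_mx e *m Q) w /\ qf (Q ^t* *m diag_mx e *m Q) w <= sqn w.
Proof.
move=> QU H; rewrite qf_spec -(sqn_unitary w QU) /sqn; split.
  by apply: sumr_ge0 => k _; case: (H k) => ->; rewrite ?mul0r ?mul1r ?exprn_ge0 ?normr_ge0.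
by apply: ler_sum => k _; case: (H k) => ->; rewrite ?mul0r ?mul1r ?exprn_ge0 ?normr_ge0.
Qed.

Lemma trace_hadamard {C : numClosedFieldType} N (Pi D : 'M[C]_N) (u : 'cV[C]_N) :
  \tr (Pi *m hadamard D (outer u)) = qf (hadamard Pi^T D) (map_mx Num.conj u).
Proof.
rewrite /mxtrace /qf.
transitivity (\sum_x \sum_y Pi x y * (D y x * (u y 0 * (u x 0)^*))).
  apply: eq_bigr => x _; rewrite mxE; apply: eq_bigr => y _.
  by rewrite !mxE big_ord1 !mxE.
rewrite exchange_big /=; apply: eq_bigr => x _.
by apply: eq_bigr => y _; rewrite !mxE conjCK; ring.
Qed.

Theorem proposition2p1 (C : numClosedFieldType) (Sigma : finType) (n : nat)
    (hn : (1 <= n)%N) (X : {set n.-tuple Sigma}) (rho sigma : 'M[C]_#|X|) :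
  gram_of_unit_vectors rho -> gram_of_unit_vectors sigma ->
  forall u : 'cV[C]_#|X|, unit_vec u ->
  exists G : 'M[C]_#|X|, adv_feasible X G /\
    trace_dist (hadamard rho (outer u)) (hadamard sigma (outer u))
      <= opnorm (hadamard G (rho - sigma)).
Proof.
move=> hr hs u uu.
have [rH rD] := gram_props hr; have [sH sD] := gram_props hs.
set A := hadamard rho (outer u) - hadamard sigma (outer u).
have AE : A = hadamard (rho - sigma) (outer u).
  by apply/matrixP => x y; rewrite !mxE mulrBl.
have OH : (outer u) ^t* = outer u.
  by rewrite /outer mxstarE trmx_mul map_mxM trmxCK.
have DH : (rho - sigma) ^t* = rho - sigma.
  by apply: hermI => x y; rewrite !mxE rmorphB /= (hermE rH) (hermE sH).
have AH : A ^t* = A by rewrite AE hadamard_herm.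
have [P [d [PU Ad]]] := normal_spec (herm_normal AH).
have dR : forall k, (d 0 k)^* = d 0 k.
  by move=> k; apply: (spec_herm_real PU); rewrite -Ad.
pose pi : 'rV[C]_#|X| := \row_k (if 0 < d 0 k then 1 else 0).
pose Q := map_mx Num.conj P.
pose G := Q ^t* *m diag_mx pi *m Q.
have QU : Q \is unitarymx by rewrite conjC_unitary.
have GT : G = (P ^t* *m diag_mx pi *m P) ^T by rewrite transpose_spec.
have pi01 : forall k, pi 0 k = 0 \/ pi 0 k = 1.
  by move=> k; rewrite mxE; case: ifP; [right|left].
have piR : forall k, (pi 0 k)^* = pi 0 k.
  by move=> k; case: (pi01 k) => ->; rewrite ?conjC0 ?conjC1.
have GH : G ^t* = G by apply: spec_herm.
have Gb : forall w, 0 <= qf G w /\ qf G w <= sqn w by move=> w; apply: qf_proj.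
exists G; split.
  split; first by rewrite /Defs.hermitian mxstarE.
  move=> j.
  have DjH : (Delta X j : 'M[C]_#|X|) ^t* = Delta X j.
    apply: hermI => x y; rewrite !mxE rmorphB /= conjC1 conjC_nat eq_sym //.
  have BjH := hadamard_herm GH DjH.
  have [P' [d' [P'U E]]] := normal_spec (herm_normal BjH).
  rewrite E; apply: opnorm_le_qf => // v; rewrite -E mul1r qf_Delta.
  have [g0 g1] := Gb v.
  apply: lemma_abs => //.
    by apply: sumr_ge0 => a _; have [] := Gb (mask X j a v).
  rewrite -(@sqn_mask _ _ _ X j v); apply: ler_sum => a _.
  by have [] := Gb (mask X j a v).
have BH : (hadamard G (rho - sigma)) ^t* = hadamard G (rho - sigma).
  exact: hadamard_herm.
have [P' [d' [P'U E]]] := normal_spec (herm_normal BH).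
have trA : \sum_k d 0 k = 0.
  rewrite -mxtrace_diag -(mulmxtVK (diag_mx d) PU) -mxtrace_mulC mulmxA -Ad AE.
  by rewrite /mxtrace big1 // => x _; rewrite !mxE rD sD subrr mul0r.
have key : \sum_k `|d 0 k| = 2 * \sum_k pi 0 k * d 0 k.
  have F : forall k, `|d 0 k| = 2 * (pi 0 k * d 0 k) - d 0 k.
    move=> k; rewrite mxE; have /CrealP rk := dR k.
    by case: (real_le0P rk) => h /=; ring.
  by rewrite (eq_bigr _ (fun k _ => F k)) sumrB -mulr_sumr trA subr0.
have tr2 : \sum_k pi 0 k * d 0 k = qf (hadamard G (rho - sigma)) (map_mx Num.conj u).
  rewrite GT -trace_hadamard -AE Ad !mulmxA -(mulmxA _ P) (unitarymxP PU) mulmx1.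
  rewrite -(mulmxA (P ^t*)) mulmx_diag mxtrace_mulC mulmxA (unitarymxP PU) mul1mx.
  by rewrite mxtrace_diag; apply: eq_bigr => k _; rewrite !mxE.
have sq1 : sqn (map_mx Num.conj u) = 1.
  by rewrite -uu /sqn; apply: eq_bigr => i _; rewrite mxE norm_conjC.
rewrite /trace_dist -/A Ad trnorm_spec // key mulrC mulKf ?pnatr_eq0 // tr2.
apply: le_trans (real_ler_norm _) _.
  rewrite -tr2; apply: rpred_sum => k _; apply: rpredM; apply/CrealP; done.
by rewrite E; apply: le_trans (opnorm_qf _ _ P'U) _; rewrite -E sq1 mulr1.
Qed.
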